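(* Let $\mathcal Y\subset\mathbb R^d$ be finite with no element a strict convex combination of others, $\kappa>0$, $\gamma_i=(c(y,\xi_i))_{y\in\mathcal Y}$ for $i\in[N]$, and $\Omega_\Delta$ a proper l.s.c. convex function with domain $\Delta^{\mathcal Y}$ whose restriction to the affine hull of $\Delta^{\mathcal Y}$ is Legendre-type. For $q_\otimes=(q_i)_{i\in[N]}\in\Delta_\otimes$ let $\bar{\mathcal S}_{\Omega_\Delta,N}(q_\otimes):=\inf_{s_\otimes\in\bar S_\otimes}\mathcal S_N(s_\otimes,q_\otimes)$. Then $$\bar{\mathcal S}_{\Omega_\Delta,N}(q_\otimes)=\frac1N\sum_{i=1}^N\langle\gamma_i|q_i\rangle+\frac\kappa N\Big[\sum_{i=1}^N\Omega_\Delta(q_i)-N\,\Omega_\Delta\Big(\frac1N\sum_{i=1}^Nq_i\Big)\Big].$$ Moreover, if $\Psi_\Delta$ is a Legendre-type function with $\Omega_\Delta=\Psi_\Delta+\mathbb I_{\Delta^{\mathcal Y}}$, then $\bar{\mathcal S}_{\Omega_\Delta,N}$ coincides on $\Delta_\otimes$ with $$\bar{\mathcal S}_{\Psi_\Delta,N}(q_\otimes):=\frac1N\sum_{i=1}^N\langle\gamma_i|q_i\rangle+\frac\kappa N\Big[\sum_{i=1}^N\Psi_\Delta(q_i)-N\,\Psi_\Delta\Big(\frac1N\sum_{i=1}^Nq_i\Big)\Big],$$ and $\bar{\mathcal S}_{\Psi_\Delta,N}$ is convex if the function $q_\otimes\mapsto\frac1N\sum_i\Psi_\Delta(q_i)-\Psi_\Delta(\frac1N\sum_iq_i)$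 is convex; this latter function is non-negative.
   Context: $\Delta^{\mathcal Y}$ is the probability simplex indexed by $\mathcal Y$, $\Delta_\otimes=(\Delta^{\mathcal Y})^N$, $\bar S_\otimes=\{(s_1,\dots,s_N)\in(\mathbb R^{\mathcal Y})^N:s_1=\dots=s_N\}$, $\mathbb I_A$ is the indicator of $A$. Legendre-type: strictly convex on the interior of the domain and essentially smooth (w.r.t. the affine hull's metric for restrictions). $\mathcal L_{\Omega_\Delta}(s;q)=\Omega_\Delta(q)+\Omega_\Delta^*(s)-\langle s|q\rangle$, and $\mathcal S_N(s_\otimes,q_\otimes)=\frac1N\sum_{i=1}^N\big[\langle\gamma_i|q_i\rangle+\kappa\mathcal L_{\Omega_\Delta}(s_i;q_i)\big]$. *)

(* Defs.v *)
From HB Require Import structures.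
From mathcomp Require Import all_boot all_order all_algebra.
From mathcomp Require Import all_classical all_reals all_analysis.
Set Implicit Arguments. Unset Strict Implicit. Unset Printing Implicit Defensive.
Import Order.TTheory GRing.Theory Num.Theory.
Local Open Scope classical_set_scope.
Local Open Scope ring_scope.

Section Defs.
Variables (R : realType) (Y : finType).

Definition vec := Y -> R.
Definition dotp (s q : vec) : R := \sum_(y : Y) s y * q y.
Definition vsub (u v : vec) : vec := fun y => u y - v y.
Definition vnorm (v : vec) : R := Num.sqrt (dotp v v).
Definition vcomb (t : R) (u v : vec) : vec := fun y => t * u y + (1 - t) * v y.

Definition simplex : set vec :=
  [set q | (forall y, 0 <= q y) /\ \sum_(y : Y) q y = 1].

Definition aff_hull (C : set vec) : set vec :=
  [set x | exists (n : nat) (w : 'I_n -> R) (p : 'I_n -> vec),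
     (forall i, C (p i)) /\ \sum_(i < n) w i = 1 /\
     (forall y, x y = \sum_(i < n) w i * p i y)].

Definition edom (f : vec -> \bar R) : set vec := [set q | (f q < +oo)%E].

Definition proper_fun (f : vec -> \bar R) :=
  (forall q, f q != -oo%E) /\ (exists q, (f q < +oo)%E).

Definition convex_fun (f : vec -> \bar R) :=
  forall u v t, 0 < t < 1 ->
    (f (vcomb t u v) <= t%:E * f u + (1 - t)%:E * f v)%E.

Definition lsc_fun (f : vec -> \bar R) :=
  forall q (a : R), (a%:E < f q)%E ->
    exists2 d, 0 < d & forall z, vnorm (vsub z q) < d -> (a%:E < f z)%E.

Definition set_indic (C : set vec) (q : vec) : \bar R :=
  if `[< C q >] then 0%E else +oo%E.

Definition rel_int (A C : set vec) : set vec :=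
  [set x | C x /\ exists2 e, 0 < e &
     forall z, A z -> vnorm (vsub z x) < e -> C z].

(* The restriction of f to the affine set A is of Legendre type:
   proper convex on A, strictly convex on the (relative) interior I of its
   domain, differentiable on I (gradient in the direction space of A), and
   essentially smooth (gradient norm blows up at the relative boundary). *)
Definition legendre_on (A : set vec) (f : vec -> \bar R) :=
  let I := rel_int A (edom f `&` A) in
  [/\ (forall q, A q -> f q != -oo%E) /\ (exists q, A q /\ (f q < +oo)%E),
      (forall u v t, A u -> A v -> 0 < t < 1 ->
         (f (vcomb t u v) <= t%:E * f u + (1 - t)%:E * f v)%E),
      (exists x, I x),
      (forall u v t, I u -> I v -> u <> v -> 0 < t < 1 ->
         (f (vcomb t u v) < t%:E * f u + (1 - t)%:E * f v)%E) &
      exists g : vec -> vec,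
        [/\ (forall x, I x -> exists a b, [/\ A a, A b & g x = vsub a b]),
            (forall x, I x -> forall e, 0 < e -> exists2 d, 0 < d &
               forall z, A z -> vnorm (vsub z x) < d ->
                 `| fine (f z) - fine (f x) - dotp (g x) (vsub z x) |
                   <= e * vnorm (vsub z x)) &
            (forall (u : nat -> vec) x, (forall k, I (u k)) ->
               (forall e, 0 < e -> exists K, forall k, (K <= k)%N ->
                  vnorm (vsub (u k) x) < e) ->
               ~ I x ->
               forall M : R, exists K, forall k, (K <= k)%N ->
                  M < vnorm (g (u k)))]].

Definition fconj (f : vec -> \bar R) (s : vec) : \bar R :=
  ereal_sup [set ((dotp s q)%:E - f q)%E | q in [set: vec]].

Definition fy_loss (f : vec -> \bar R) (s q : vec) : \bar R :=
  (f q + fconj f s - (dotp s q)%:E)%E.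

Section Prod.
Variables (N : nat) (kappa : R) (gam : 'I_N -> vec).

Definition SN (f : vec -> \bar R) (s q : 'I_N -> vec) : \bar R :=
  ((N%:R^-1)%:E * \sum_(i < N)
     ((dotp (gam i) (q i))%:E + kappa%:E * fy_loss f (s i) (q i)))%E.

(* \bar S_otimes : tuples with all components equal *)
Definition diag_set : set ('I_N -> vec) := [set s | forall i j, s i = s j].

Definition Sbar (f : vec -> \bar R) (q : 'I_N -> vec) : \bar R :=
  ereal_inf [set SN f s q | s in diag_set].

Definition vmean (q : 'I_N -> vec) : vec :=
  fun y => N%:R^-1 * \sum_(i < N) q i y.

Definition Sbar_formula (f : vec -> \bar R) (q : 'I_N -> vec) : \bar R :=
  ((N%:R^-1 * \sum_(i < N) dotp (gam i) (q i))%:E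
   + (kappa / N%:R)%:E * (\sum_(i < N) f (q i) - N%:R%:E * f (vmean q)))%E.

Definition Fgap (f : vec -> \bar R) (q : 'I_N -> vec) : \bar R :=
  ((N%:R^-1)%:E * \sum_(i < N) f (q i) - f (vmean q))%E.

Definition prod_simplex : set ('I_N -> vec) := [set q | forall i, simplex (q i)].
Definition prod_dom (f : vec -> \bar R) : set ('I_N -> vec) :=
  [set q | forall i, edom f (q i)].

Definition vcombN (t : R) (q q' : 'I_N -> vec) : 'I_N -> vec :=
  fun i => vcomb t (q i) (q' i).

Definition convex_on (D : set ('I_N -> vec)) (F : ('I_N -> vec) -> \bar R) :=
  forall q q' t, D q -> D q' -> 0 < t < 1 ->
    (F (vcombN t q q') <= t%:E * F q + (1 - t)%:E * F q')%E.
End Prod.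

End Defs.

Definition no_cvx_comb (R : realType) (d : nat) (Y : finType)
  (pt : Y -> 'rV[R]_d) :=
  forall (y : Y) (lam : Y -> R), (forall z, 0 <= lam z) -> lam y = 0 ->
    \sum_(z : Y) lam z = 1 -> pt y <> \sum_(z : Y) lam z *: pt z.

(* Main.v *)
Require Import Defs.
From HB Require Import structures.
From mathcomp Require Import all_boot all_order all_algebra.
From mathcomp Require Import all_classical all_reals all_analysis.
From mathcomp Require Import ring lra.
Set Implicit Arguments. Unset Strict Implicit. Unset Printing Implicit Defensive.
Import Order.TTheory GRing.Theory Num.Theory.
Local Open Scope classical_set_scope.
Local Open Scope ring_scope.

Section Aux.
Variables (R : realType) (Y : finType).
Implicit Types (u v s q x : vec R Y).

Lemma dotpZr s (a : R) v : dotp s (fun y => a * v y) = a * dotp s v.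
Proof. by rewrite /dotp mulr_sumr; apply: eq_bigr => y _; rewrite mulrCA. Qed.

Lemma dotpBr s u v : dotp s (vsub u v) = dotp s u - dotp s v.
Proof. by rewrite /dotp -sumrB; apply: eq_bigr => y _; rewrite /vsub mulrBr. Qed.

Lemma dotpDr s u v : dotp s (fun y => u y + v y) = dotp s u + dotp s v.
Proof. by rewrite /dotp -big_split; apply: eq_bigr => y _; rewrite mulrDr. Qed.

Lemma dotp_vcomb s t u v : dotp s (vcomb t u v) = t * dotp s u + (1 - t) * dotp s v.
Proof.
rewrite /vcomb (dotpDr s (fun y => t * u y) (fun y => (1 - t) * v y)).
by rewrite !dotpZr.
Qed.

Lemma dotp_ge0 v : 0 <= dotp v v.
Proof. by rewrite /dotp sumr_ge0 // => y _; rewrite -expr2 sqr_ge0. Qed.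

Lemma vnormZ (a : R) v : vnorm (fun y => a * v y) = `|a| * vnorm v.
Proof.
rewrite /vnorm.
have -> : dotp (fun y => a * v y) (fun y => a * v y) = a ^+ 2 * dotp v v.
  rewrite /dotp mulr_sumr; apply: eq_bigr => y _.
  by rewrite expr2 -!mulrA; congr (_ * _); rewrite mulrCA.
by rewrite sqrtrM ?sqr_ge0 // sqrtr_sqr.
Qed.

Lemma vnorm_ge0 v : 0 <= vnorm v.
Proof. exact: sqrtr_ge0. Qed.

Lemma aff_simplexP x : aff_hull (simplex (Y := Y)) x <-> \sum_y x y = 1.
Proof.
split.
  move=> [n [w [p [Cp [w1 xE]]]]].
  under eq_bigr do rewrite xE.
  rewrite exchange_big /= -w1; apply: eq_bigr => i _.
  by rewrite -mulr_sumr (proj2 (Cp i)) mulr1.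
move=> x1; exists #|Y|, (fun i => x (enum_val i)),
  (fun i y => (enum_val i == y)%:R); split; [|split].
- move=> i; split; first by move=> y; rewrite ler0n.
  rewrite (bigD1 (enum_val i)) //= eqxx big1 ?addr0 // => y /negbTE.
  by rewrite eq_sym => ->.
- rewrite -x1 [RHS](big_enum_val (A := predT)) /=; by [].
- move=> y; rewrite -[RHS](big_enum_val (A := predT) (fun z => x z * (z == y)%:R)) /=.
  rewrite (bigD1 y) //= eqxx mulr1 big1 ?addr0 // => z /negbTE ->.
  by rewrite mulr0.
Qed.

Lemma simplex_aff x : simplex x -> aff_hull (simplex (Y := Y)) x.
Proof. by move=> [_ h]; apply/aff_simplexP. Qed.

Lemma simplex_vcomb t u v : 0 <= t <= 1 -> simplex u -> simplex v ->
  simplex (vcomb t u v).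
Proof.
move=> /andP[t0 t1] [u0 u1] [v0 v1]; split.
  by move=> y; rewrite /vcomb addr_ge0 // mulr_ge0 // subr_ge0.
rewrite /vcomb big_split /= -!mulr_sumr u1 v1; lra.
Qed.

End Aux.

Section Om.
Variables (R : realType) (Y : finType) (Om : vec R Y -> \bar R).
Hypotheses (Hprop : proper_fun Om) (Hdom : edom Om = simplex (Y := Y)).
Hypothesis (Hcvx : convex_fun Om).
Implicit Types (u v s q x z w : vec R Y).

Definition om q := fine (Om q).

Lemma OmE q : simplex q -> Om q = (om q)%:E.
Proof.
move=> hq; have : edom Om q by rewrite Hdom.
rewrite /edom /= => lt; rewrite /om fineK // fin_numE (proj1 Hprop q) /=.
by rewrite lt_eqF.
Qed.

Lemma Om_oo q : ~ simplex q -> Om q = +oo%E.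
Proof.
move=> nq; have : ~ edom Om q by rewrite Hdom.
by rewrite /edom /= ltey => /negP; rewrite negbK => /eqP.
Qed.

Lemma subgrad x z g0 : simplex x -> simplex z ->
  (forall e, 0 < e -> exists2 d, 0 < d &
     forall w, aff_hull (simplex (Y := Y)) w -> vnorm (vsub w x) < d ->
       `| fine (Om w) - fine (Om x) - dotp g0 (vsub w x) | <= e * vnorm (vsub w x)) ->
  dotp g0 (vsub z x) <= om z - om x.
Proof.
move=> sx sz Hd; set n := vnorm (vsub z x).
have n0 : 0 <= n by exact: vnorm_ge0.
apply/ler_addgt0Pr => e e0.
have e'0 : 0 < e / (n + 1) by rewrite divr_gt0 // ltr_wpDl.
have [dd d0 Hdd] := Hd _ e'0.
set t := Num.min (1/2) (dd / (2 * (n + 1))).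
have t0 : 0 < t by rewrite lt_min divr_gt0 //= divr_gt0 // mulr_gt0 // ltr_wpDl.
have t1 : t <= 1/2 by rewrite ge_min lexx.
have t2 : t <= dd / (2 * (n + 1)) by rewrite ge_min lexx orbT.
set w := vcomb t z x.
have sw : simplex w by apply: simplex_vcomb => //; rewrite ltW //=; lra.
have wE : vsub w x = (fun y => t * vsub z x y).
  by apply/funext => y; rewrite /vsub /w /vcomb; ring.
have nw : vnorm (vsub w x) = t * n by rewrite wE vnormZ ger0_norm // ltW.
have ltd : vnorm (vsub w x) < dd.
  rewrite nw; apply: (le_lt_trans (y := dd / (2 * (n + 1)) * n)).
    by rewrite ler_wpM2r.
  rewrite mulrAC ltr_pdivrMr ?mulr_gt0 ?ltr_wpDl //; nra.
have := Hdd w (simplex_aff sw) ltd.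
rewrite wE dotpZr -wE nw -/(om w) -/(om x) => hab.
have := Hcvx z x (t := t); rewrite -/w t0 /= => /(_ ltac:(lra)).
rewrite (OmE sw) (OmE sz) (OmE sx) -!EFinM -EFinD lee_fin => cv.
have hab' := ler_normlW hab.
have : t * dotp g0 (vsub z x) <= t * (om z - om x + e / (n + 1) * n).
  set a := dotp g0 _ in hab hab' *.
  have h1 := ler_norm (om w - om x - t * a).
  rewrite mulrDr.
  move: hab; rewrite ler_norml => /andP[hl _].
  have E1 : t * (om z - om x) = t * om z + (1 - t) * om x - om x by ring.
  have E2 : e / (n + 1) * (t * n) = t * (e / (n + 1) * n) by ring.
  rewrite E1 -E2; lra.
rewrite ler_pM2l // => h; apply: (le_trans h); rewrite lerD2l.
rewrite mulrAC ler_pdivrMr ?ltr_wpDl //; nra.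
Qed.

End Om.

Section Om2.
Variables (R : realType) (Y : finType) (Om : vec R Y -> \bar R).
Hypotheses (Hprop : proper_fun Om) (Hdom : edom Om = simplex (Y := Y)).
Implicit Types (u v s q x z w : vec R Y).

Lemma fconj_ge s q : simplex q -> ((dotp s q - om Om q)%:E <= fconj Om s)%E.
Proof.
move=> sq; apply: ereal_sup_ubound; exists q => //.
by rewrite (OmE Hprop Hdom sq).
Qed.

Lemma fconj_at x g0 : simplex x ->
  (forall z, simplex z -> dotp g0 (vsub z x) <= om Om z - om Om x) ->
  fconj Om g0 = (dotp g0 x - om Om x)%:E.
Proof.
move=> sx hz; apply/eqP; rewrite eq_le fconj_ge // andbT.
apply: ge_ereal_sup => _ [q _ <-].
have [sq|nq] := pselect (simplex q).
  rewrite (OmE Hprop Hdom sq) -EFinB lee_fin.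
  have := hz q sq; rewrite dotpBr; lra.
by rewrite (Om_oo Hdom nq) /= leNye.
Qed.

Lemma relint_comb x0 qb t :
  rel_int (aff_hull (simplex (Y := Y))) (simplex (Y := Y) `&` aff_hull (simplex (Y := Y))) x0 ->
  simplex qb -> 0 < t <= 1 ->
  rel_int (aff_hull (simplex (Y := Y))) (simplex (Y := Y) `&` aff_hull (simplex (Y := Y))) (vcomb t x0 qb).
Proof.
move=> [[sx0 _] [e e0 He]] sqb /andP[t0 t1].
have sxt : simplex (vcomb t x0 qb) by apply: simplex_vcomb; rewrite ?t1 ?ltW.
split; first by split => //; exact: simplex_aff.
exists (t * e); first by rewrite mulr_gt0.
move=> z Az hz.
set z' := fun y => t^-1 * (z y - (1 - t) * qb y).
have Az' : aff_hull (simplex (Y := Y)) z'.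
  apply/aff_simplexP; move/aff_simplexP: Az => z1.
  rewrite /z' -mulr_sumr sumrB -mulr_sumr z1 (proj2 sqb); field.
  by rewrite gt_eqF.
have ez : vsub z' x0 = (fun y => t^-1 * vsub z (vcomb t x0 qb) y).
  apply/funext => y; rewrite /vsub /z' /vcomb; field; by rewrite gt_eqF.
have : vnorm (vsub z' x0) < e.
  rewrite ez vnormZ ger0_norm ?invr_ge0 ?ltW //.
  by rewrite mulrC -ltr_pdivlMr ?invr_gt0 // invrK mulrC.
move=> /(He z' Az') [[z'0 z'1] _].
have -> : z = vcomb t z' qb :> (Y -> R).
  apply: funext => y; rewrite /vcomb /z'; field; by rewrite gt_eqF.
have sv : simplex (vcomb t z' qb) by apply: simplex_vcomb => //; rewrite t1 ltW.
by split => //; exact: simplex_aff.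
Qed.

End Om2.

Section Prod.
Variables (R : realType) (Y : finType) (N : nat) (kappa : R) (gam : 'I_N -> vec R Y).
Hypothesis N0 : (0 < N)%N.
Implicit Types (s : vec R Y) (q : 'I_N -> vec R Y).

Lemma N0R : (N%:R : R) != 0.
Proof. by rewrite pnatr_eq0 -lt0n. Qed.

Lemma sum_dotp_mean s q : \sum_i dotp s (q i) = N%:R * dotp s (vmean q).
Proof.
rewrite /dotp /vmean.
have -> : \sum_y s y * (N%:R^-1 * \sum_i q i y) = N%:R^-1 * \sum_y \sum_i s y * q i y.
  by rewrite mulr_sumr; apply: eq_bigr => y _; rewrite mulrCA mulr_sumr.
by rewrite mulrA mulfV ?N0R // mul1r exchange_big.
Qed.

Lemma vmean_simplex q : prod_simplex q -> simplex (vmean q).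
Proof.
move=> hq; split.
  move=> y; rewrite /vmean mulr_ge0 ?invr_ge0 ?ler0n // sumr_ge0 // => i _.
  exact: (proj1 (hq i)).
rewrite /vmean -mulr_sumr exchange_big /=.
under eq_bigr do rewrite (proj2 (hq _)).
by rewrite sumr_const card_ord -[1 *+ N]mulr_natl mulr1 mulVf ?N0R.
Qed.

Definition Val (b : 'I_N -> R) s C q :=
  N%:R^-1 * \sum_i (dotp (gam i) (q i) + kappa * (b i + C - dotp s (q i))).

Definition Phi (b : 'I_N -> R) (bm : R) q :=
  N%:R^-1 * \sum_i dotp (gam i) (q i) + kappa / N%:R * (\sum_i b i - N%:R * bm).

Lemma ValE b bm s C q :
  Val b s C q = Phi b bm q + kappa * (C - dotp s (vmean q) + bm).
Proof.
rewrite /Val /Phi big_split /=.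
rewrite -mulr_sumr.
have -> : \sum_i (b i + C - dotp s (q i)) = \sum_i b i + N%:R * C - N%:R * dotp s (vmean q).
  rewrite -sum_dotp_mean sumrB big_split /= sumr_const card_ord mulr_natl //.
have := N0R; move: (N%:R : R) => n n0.
by field.
Qed.

Lemma SN_real (f : vec R Y -> \bar R) s0 q (b : 'I_N -> R) c :
  fconj f s0 = c%:E -> (forall i, f (q i) = (b i)%:E) ->
  SN kappa gam f (fun _ => s0) q = (Val b s0 c q)%:E.
Proof.
move=> fc fb; rewrite /SN /Val /fy_loss fc.
under eq_bigr do rewrite fb -EFinD.
by rewrite sumEFin -EFinM.
Qed.

Lemma SN_lb (f : vec R Y -> \bar R) s0 q (b : 'I_N -> R) C :
  (C%:E <= fconj f s0)%E -> (forall i, f (q i) = (b i)%:E) -> 0 <= kappa ->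
  ((Val b s0 C q)%:E <= SN kappa gam f (fun _ => s0) q)%E.
Proof.
move=> fc fb k0; rewrite /SN /Val EFinM -sumEFin.
apply: lee_wpmul2l; first by rewrite lee_fin invr_ge0 ler0n.
apply: lee_sum => i _; rewrite /fy_loss fb.
rewrite EFinD; apply: leeD2l; rewrite EFinM; apply: lee_wpmul2l; first by rewrite lee_fin.
by rewrite !EFinB EFinD; apply: leeB => //; apply: leeD2l.
Qed.

End Prod.

Lemma part1 (R : realType) (Y : finType) (N : nat) (kappa : R) (gam : 'I_N -> vec R Y)
  (Om : vec R Y -> \bar R) :
  (0 < N)%N -> 0 < kappa -> proper_fun Om -> lsc_fun Om -> convex_fun Om ->
  edom Om = simplex (Y := Y) -> legendre_on (aff_hull (simplex (Y := Y))) Om ->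
  forall q, prod_simplex q -> Sbar kappa gam Om q = Sbar_formula kappa gam Om q.
Proof.
move=> N0 k0 Hp Hl Hc Hd [_ _ [x0 Ix0] _ [g [_ gd _]]] q hq.
rewrite Hd in Ix0 gd.
set qb := vmean q.
have sqb : simplex qb by exact: vmean_simplex.
set b := fun i => om Om (q i).
have fb : forall i, Om (q i) = (b i)%:E by move=> i; rewrite (OmE Hp Hd (hq i)).
have FE : Sbar_formula kappa gam Om q = (Phi kappa gam b (om Om qb) q)%:E.
  have sE : (\sum_i Om (q i) = (\sum_i b i)%:E)%E.
    by rewrite -sumEFin; apply: eq_bigr => i _; apply: fb.
  by rewrite /Sbar_formula /Phi sE (OmE Hp Hd sqb).
rewrite FE; apply/eqP; rewrite eq_le; apply/andP; split; last first.
  apply: le_ereal_inf_tmp => _ [s ds <-].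
  have -> : s = fun _ => s (Ordinal N0) by apply: funext => i; apply: ds.
  set s0 := s (Ordinal N0).
  have fc := fconj_ge Hp Hd s0 sqb.
  have := SN_lb gam fc fb (ltW k0).
  rewrite (ValE _ _ N0 _ (om Om qb)). have -> : dotp s0 qb - om Om qb - dotp s0 (vmean q) + om Om qb = 0 by rewrite -/qb; ring.
  by rewrite mulr0 addr0.
apply/lee_addgt0Pr => e e0.
have [sx0 _] := proj1 Ix0.
set v := om Om x0; set w := om Om qb; set M := vnorm (vsub x0 qb).
set K := `|v - w|; set ep := e / kappa.
have ep0 : 0 < ep by rewrite divr_gt0.
have M0 : 0 <= M by exact: vnorm_ge0.
have K0 : 0 <= K by exact: normr_ge0.
have [dl dl0 Hdl] : exists2 dl, 0 < dl & forall z, vnorm (vsub z qb) < dl ->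
    ((w - ep / 4)%:E < Om z)%E.
  apply: Hl; rewrite (OmE Hp Hd sqb) lte_fin -/w; lra.
set t := Num.min (1/2) (Num.min (dl / (2 * (M + 1))) (ep / (4 * (K + 1)))).
have t0 : 0 < t.
  by rewrite !lt_min !divr_gt0 ?mulr_gt0 ?ltr_wpDl //=.
have t1 : t <= 1/2 by rewrite ge_min lexx.
have t2 : t <= dl / (2 * (M + 1)) by rewrite !ge_min lexx !orbT.
have t3 : t <= ep / (4 * (K + 1)) by rewrite !ge_min lexx !orbT.
set xt := vcomb t x0 qb.
have Ixt := relint_comb Ix0 sqb (t := t) ltac:(rewrite t0 /=; lra).
have [sxt _] := proj1 Ixt.
set s0 := g xt.
have sg : forall z, simplex z -> dotp s0 (vsub z xt) <= om Om z - om Om xt.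
  by move=> z sz; apply: (subgrad Hp Hd Hc sxt sz); apply: gd.
have fc := fconj_at Hp Hd sxt sg.
set u := om Om xt.
have E1 : vsub xt qb = (fun y => t * vsub x0 qb y).
  by apply/funext => y; rewrite /vsub /xt /vcomb; ring.
have E2 : vsub x0 xt = (fun y => (1 - t) * vsub x0 qb y).
  by apply/funext => y; rewrite /vsub /xt /vcomb; ring.
have lsc : w - ep / 4 < u.
  have : vnorm (vsub xt qb) < dl.
    rewrite E1 vnormZ ger0_norm ?ltW // -/M.
    apply: (le_lt_trans (y := dl / (2 * (M + 1)) * M)); first by rewrite ler_wpM2r.
    rewrite mulrAC ltr_pdivrMr ?mulr_gt0 ?ltr_wpDl //; nra.
  by move/Hdl; rewrite (OmE Hp Hd sxt) lte_fin.
set D := dotp s0 (vsub x0 qb).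
have h1 : (1 - t) * D <= v - u by have := sg x0 sx0; rewrite E2 dotpZr.
have h2 : dotp s0 xt - dotp s0 qb = t * D by rewrite -dotpBr E1 dotpZr.
have h3 : t * (v - w) <= ep / 4.
  apply: (le_trans (y := t * K)); first by apply: ler_wpM2l; [exact: ltW | exact: ler_norm].
  apply: (le_trans (y := ep / (4 * (K + 1)) * K)); first by rewrite ler_wpM2r.
  rewrite mulrAC ler_pdivrMr ?mulr_gt0 ?ltr_wpDl //; nra.
have key : dotp s0 xt - u - dotp s0 qb + w <= ep.
  have h4 : t * ((1 - t) * D) <= t * (v - u) := ler_wpM2l (ltW t0) h1.
  nra.
apply: ge_ereal_inf; exists (SN kappa gam Om (fun _ => s0) q).
  by exists (fun _ => s0).
rewrite (SN_real kappa gam fc fb) (ValE _ _ N0 _ w) -EFinD lee_fin lerD2l.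
have -> : e = kappa * ep by rewrite /ep mulrC divfK ?gt_eqF.
by rewrite ler_pM2l.
Qed.

Section Psi.
Variables (R : realType) (Y : finType) (Psi : vec R Y -> \bar R).
Hypothesis Pn : forall q, Psi q != -oo%E.
Hypothesis Pc : forall u v t, 0 < t < 1 ->
  (Psi (vcomb t u v) <= t%:E * Psi u + (1 - t)%:E * Psi v)%E.

Definition ps q := fine (Psi q).

Lemma PsiE q : (Psi q < +oo)%E -> Psi q = (ps q)%:E.
Proof. by move=> h; rewrite /ps fineK // fin_numE Pn lt_eqF. Qed.

Lemma Pc_fin u v t : 0 < t < 1 -> (Psi u < +oo)%E -> (Psi v < +oo)%E ->
  (Psi (vcomb t u v) < +oo)%E /\ ps (vcomb t u v) <= t * ps u + (1 - t) * ps v.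
Proof.
move=> t01 hu hv; have := Pc u v t01.
rewrite (PsiE hu) (PsiE hv) -!EFinM -EFinD => h.
have hw : (Psi (vcomb t u v) < +oo)%E by apply: le_lt_trans h _; rewrite ltey.
by split => //; move: h; rewrite (PsiE hw) lee_fin.
Qed.

Lemma jensen n (q : 'I_n.+1 -> vec R Y) : (forall i, Psi (q i) < +oo)%E ->
  (Psi (vmean q) < +oo)%E /\ ps (vmean q) <= n.+1%:R^-1 * \sum_i ps (q i).
Proof.
elim: n q => [|n IH] q hq.
  have -> : vmean q = q ord0.
    by apply/funext => y; rewrite /vmean big_ord1 invr1 mul1r.
  by split => //; rewrite big_ord1 invr1 mul1r.
set qw := fun i : 'I_n.+1 => q (widen_ord (leqnSn _) i).
have [h1 h2] := IH qw (fun i => hq _).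
set t : R := n.+1%:R / n.+2%:R.
have t01 : 0 < t < 1.
  rewrite divr_gt0 ?ltr0n //= ltr_pdivrMr ?ltr0n // mul1r ltr_nat //.
have n1 : (n.+1%:R : R) != 0 by rewrite pnatr_eq0.
have n2 : (n.+2%:R : R) != 0 by rewrite pnatr_eq0.
have E : vmean q = vcomb t (vmean qw) (q ord_max).
  apply/funext => y; rewrite /vmean /vcomb big_ord_recr /= /t.
  rewrite [(n.+2%:R : R)]mulrS [(n.+1%:R : R)]mulrS.
  move: n1 n2; rewrite [(n.+2%:R : R)]mulrS [(n.+1%:R : R)]mulrS => n1 n2.
  by field; rewrite n2 n1.
have [h3 h4] := Pc_fin t01 h1 (hq ord_max).
rewrite E; split => //; apply: (le_trans h4).
rewrite big_ord_recr /=.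
have : t * ps (vmean qw) <= t * (n.+1%:R^-1 * \sum_i ps (qw i)).
  by apply: ler_wpM2l h2; rewrite ltW //; case/andP: t01.
rewrite -/(qw _).
have -> : t * (n.+1%:R^-1 * \sum_i ps (qw i)) = n.+2%:R^-1 * \sum_i ps (qw i).
  rewrite /t; field; have h0 := ler0n R n; apply/andP; split; apply/negP => /eqP; lra.
have -> : 1 - t = n.+2%:R^-1.
  rewrite /t mulrS; field; have h0 := ler0n R n; apply/negP => /eqP; lra.
rewrite mulrDr => h; rewrite lerD2r; exact: h.
Qed.

Lemma jensenN N (N0 : (0 < N)%N) (q : 'I_N -> vec R Y) : (forall i, Psi (q i) < +oo)%E ->
  (Psi (vmean q) < +oo)%E /\ ps (vmean q) <= N%:R^-1 * \sum_i ps (q i).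
Proof. by case: N N0 q => // n _ q; exact: jensen. Qed.

End Psi.

Section Psi2.
Variables (R : realType) (Y : finType) (Psi : vec R Y -> \bar R).
Hypothesis Pn : forall q, Psi q != -oo%E.
Hypothesis Pc : forall u v t, 0 < t < 1 ->
  (Psi (vcomb t u v) <= t%:E * Psi u + (1 - t)%:E * Psi v)%E.
Variables (N : nat) (kappa : R) (gam : 'I_N -> vec R Y).
Hypothesis N0 : (0 < N)%N.

Definition Lf (q : 'I_N -> vec R Y) := N%:R^-1 * \sum_i dotp (gam i) (q i).
Definition Gf (q : 'I_N -> vec R Y) := N%:R^-1 * \sum_i ps Psi (q i) - ps Psi (vmean q).

Lemma formE q : prod_dom Psi q ->
  Sbar_formula kappa gam Psi q = (Lf q + kappa * Gf q)%:E /\ Fgap Psi q = (Gf q)%:E.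
Proof.
move=> hq.
have [hm hj] := jensenN Pn Pc N0 hq.
have sE : (\sum_i Psi (q i) = (\sum_i ps Psi (q i))%:E)%E.
  by rewrite -sumEFin; apply: eq_bigr => i _; apply: (PsiE Pn (hq i)).
rewrite /Sbar_formula /Fgap sE (PsiE Pn hm); split => //.
congr (_%:E); rewrite /Lf /Gf; have := N0R R N0; move: (N%:R : R) => n n0.
by field.
Qed.

Lemma Lf_comb t q q' : Lf (vcombN t q q') = t * Lf q + (1 - t) * Lf q'.
Proof.
rewrite /Lf /vcombN.
under eq_bigr do rewrite dotp_vcomb.
rewrite big_split /= -!mulr_sumr; ring.
Qed.

Lemma dom_comb t (q q' : 'I_N -> vec R Y) : 0 < t < 1 -> prod_dom Psi q -> prod_dom Psi q' ->
  prod_dom Psi (vcombN t q q').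
Proof. by move=> t01 hq hq' i; have [] := Pc_fin Pn Pc t01 (hq i) (hq' i). Qed.

End Psi2.

Theorem lemma1 (R : realType) (d : nat) (Y : finType) (pt : Y -> 'rV[R]_d)
  (Xi : Type) (c : 'rV[R]_d -> Xi -> R) (N : nat) (xi : 'I_N -> Xi)
  (kappa : R) (Omega : vec R Y -> \bar R) :
  injective pt -> no_cvx_comb pt -> (0 < N)%N -> 0 < kappa ->
  proper_fun Omega -> lsc_fun Omega -> convex_fun Omega ->
  edom Omega = simplex (Y := Y) ->
  legendre_on (aff_hull (simplex (Y := Y))) Omega ->
  let gam : 'I_N -> vec R Y := fun i y => c (pt y) (xi i) in
  (forall q, prod_simplex q -> Sbar kappa gam Omega q = Sbar_formula kappa gam Omega q) /\
  (forall Psi : vec R Y -> \bar R,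
     legendre_on [set: vec R Y] Psi ->
     (forall q, Omega q = (Psi q + set_indic (simplex (Y := Y)) q)%E) ->
     [/\ (forall q, prod_simplex q ->
            Sbar kappa gam Omega q = Sbar_formula kappa gam Psi q),
         (forall D, D `<=` prod_dom Psi ->
            convex_on D (@Fgap R Y N Psi) -> convex_on D (Sbar_formula kappa gam Psi)) &
         (forall q, prod_dom Psi q -> (0 <= @Fgap R Y N Psi q)%E)]).
Proof.
move=> _ _ N0 k0 Hp Hl Hc Hd Hleg gam.
have P1 := part1 gam N0 k0 Hp Hl Hc Hd Hleg.
split; first exact: P1.
move=> Psi [[Pn0 _] Pc0 _ _ _] OmPsi.
have Pn : forall q, Psi q != -oo%E by move=> q; apply: Pn0.
have Pc : forall u v t, 0 < t < 1 ->
    (Psi (vcomb t u v) <= t%:E * Psi u + (1 - t)%:E * Psi v)%E.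
  by move=> u v t; apply: Pc0.
have E : forall z, simplex z -> Omega z = Psi z.
  by move=> z sz; rewrite OmPsi /set_indic asboolT // adde0.
split.
- move=> q hq; rewrite P1 //.
  have sE : (\sum_i Omega (q i) = \sum_i Psi (q i))%E.
    by apply: eq_bigr => i _; apply: E.
  by rewrite /Sbar_formula sE E //; apply: vmean_simplex.
- move=> D DP Gc q q' t Dq Dq' t01.
  have hq := DP _ Dq; have hq' := DP _ Dq'.
  have hv := dom_comb Pn Pc t01 hq hq'.
  have := Gc q q' t Dq Dq' t01.
  rewrite (formE Pn Pc kappa gam N0 hq).2 (formE Pn Pc kappa gam N0 hq').2.
  rewrite (formE Pn Pc kappa gam N0 hv).2.
  rewrite (formE Pn Pc kappa gam N0 hq).1 (formE Pn Pc kappa gam N0 hq').1.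
  rewrite (formE Pn Pc kappa gam N0 hv).1.
  rewrite -!EFinM -!EFinD !lee_fin Lf_comb => h.
  have h' := ler_wpM2l (ltW k0) h.
  have -> : t * (Lf gam q + kappa * Gf Psi q) + (1 - t) * (Lf gam q' + kappa * Gf Psi q')
    = (t * Lf gam q + (1 - t) * Lf gam q') + kappa * (t * Gf Psi q + (1 - t) * Gf Psi q').
    by ring.
  by rewrite lerD2l.
- move=> q hq; rewrite (formE Pn Pc kappa gam N0 hq).2 lee_fin subr_ge0.
  exact: (jensenN Pn Pc N0 hq).2.
Qed.
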